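(* Let $f_0,f_2>0$, $\alpha>0$, let $0<\Lambda_1<\Lambda_{in}$, and let $\mathfrak{c}:[\Lambda_1,\Lambda_{in}]\to\mathbb{R}$ be continuous with $192 f_2\Lambda^2-2f_0\mathfrak{c}(\Lambda)\neq 0$ for all $\Lambda$. Define $$G_{\rm eff}(\Lambda)=\frac{3\pi}{192 f_2\Lambda^2-2f_0\,\mathfrak{c}(\Lambda)} .$$ Let $h:[\Lambda_1,\Lambda_{in}]\to\mathbb{R}$ be continuous with $1-\tfrac{4\pi}{3}G_{\rm eff}(\Lambda)h(\Lambda)\neq 0$, and define $G_{{\rm eff},H}(\Lambda)=\dfrac{G_{\rm eff}(\Lambda)}{1-\frac{4\pi}{3}G_{\rm eff}(\Lambda)h(\Lambda)}$. Use the time–energy relation $\Lambda=e^{-\alpha t}$, i.e. $t=-\alpha^{-1}\log\Lambda$, and for a function $\mathcal{M}$ of $t$ write $\mathcal{M}(\Lambda):=\mathcal{M}(t)$ at $t=-\alpha^{-1}\log\Lambda$. (a) (No gravitational memory.) If $\mathcal{M}>0$ is differentiable on the corresponding time interval and satisfies $\dfrac{d\mathcal{M}}{dt}=-\big(G_{\rm eff}(e^{-\alpha t})\,\mathcal{M}(t)\big)^{-2}$, then for every $\Lambda\in[\Lambda_1,\Lambda_{in}]$ $$\mathcal{M}(\Lambda)=\sqrt[3]{\mathcal{M}^3(\Lambda_{in})-\frac{1}{3\alpha\pi^2}\int_\Lambda^{\Lambda_{in}}\frac{(192 f_2x^2-2f_0\mathfrak{c}(x))^2}{x}\,dx}.$$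 (b) (Gravitational memory.) If $\mathcal{M}>0$ is differentiable on the corresponding time interval and satisfies $\dfrac{d\mathcal{M}}{dt}=-\big(G_{{\rm eff},H}(e^{-\alpha t})\,\mathcal{M}(t)\big)^{-2}$, then for every $\Lambda\in[\Lambda_1,\Lambda_{in}]$ $$\mathcal{M}(\Lambda)=\sqrt[3]{\mathcal{M}^3(\Lambda_{in})-\frac{3}{\alpha}\int_\Lambda^{\Lambda_{in}}\frac{\big(1-\frac{4\pi}{3}G_{\rm eff}(x)h(x)\big)^2}{x\,G_{\rm eff}(x)^2}\,dx}.$$
   Context: Physical interpretation: $\mathcal{M}$ is the mass of a primordial black hole evaporating by Hawking radiation during the inflationary epoch ($a(t)=e^{\alpha t}$, energy $\Lambda=1/a(t)$), $\Lambda_{in}$ the energy at which this epoch begins. $G_{\rm eff}$ is the effective gravitational constant of the noncommutative geometry model, with $\mathfrak{c}(\Lambda)=\mathrm{Tr}(MM^\dagger)$ the renormalization-group-running trace of the squared Majorana mass matrix, and $h(\Lambda)$ plays the role of $|H|^2$ for a (nearly constant) Higgs field $H$. $G_{{\rm eff},H}$ is the effective gravitational constant modified by the conformal coupling of gravity to the Higgs field. *)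

(* Defs.v *)
From Stdlib Require Import Reals.
From Coquelicot Require Import Coquelicot.
Open Scope R_scope.

Definition cbrt (y : R) : R :=
  if Rlt_dec 0 y then Rpower y (1/3)
  else if Rlt_dec y 0 then - Rpower (- y) (1/3) else 0.

Definition Geff (f0 f2 : R) (c : R -> R) (L : R) : R :=
  3 * PI / (192 * f2 * L ^ 2 - 2 * f0 * c L).

Definition GeffH (f0 f2 : R) (c h : R -> R) (L : R) : R :=
  Geff f0 f2 c L / (1 - 4 * PI / 3 * Geff f0 f2 c L * h L).

Definition time_of (alpha L : R) : R := - ln L / alpha.

(* Main.v *)
Require Import Defs.
From Stdlib Require Import Reals Lra.
From Coquelicot Require Import Coquelicot.
Open Scope R_scope.

Lemma is_derive_eqv (f : R -> R) x l l' : is_derive f x l -> l = l' -> is_derive f x l'.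
Proof. intros H ->; exact H. Qed.

Lemma cbrt_cube y : 0 < y -> cbrt (y ^ 3) = y.
Proof.
  intros Hy. unfold cbrt. destruct (Rlt_dec 0 (y^3)) as [H|H].
  - rewrite <- (Rpower_pow 3 y Hy), Rpower_mult.
    replace (INR 3 * (1/3)) with 1 by (simpl; field). apply Rpower_1; lra.
  - exfalso; apply H; apply pow_lt; lra.
Qed.

Lemma time_exp alpha L : 0 < alpha -> 0 < L -> exp (- alpha * time_of alpha L) = L.
Proof.
  intros Ha HL. unfold time_of. replace (- alpha * (- ln L / alpha)) with (ln L) by (field; lra).
  now apply exp_ln.
Qed.

Lemma exp_mono x y : x <= y -> exp x <= exp y.
Proof. intros [H|H]; [left; now apply exp_increasing| subst; lra]. Qed.

Lemma F_derive (f : R -> R) (b y : R) :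
  (forall z, 0 < z -> continuous f z) -> 0 < b -> 0 < y ->
  is_derive (fun a => RInt f a b) y (- f y).
Proof.
  intros Hf Hb Hy.
  apply (is_derive_RInt' f (fun a => RInt f a b) y b).
  - assert (Hp : 0 < y / 2) by lra.
    exists (mkposreal _ Hp). intros a Ha. apply (RInt_correct (V:=R_CompleteNormedModule)).
    apply ex_RInt_continuous. intros z Hz. apply Hf.
    unfold ball in Ha; simpl in Ha; unfold AbsRing_ball, abs, minus, plus, opp in Ha; simpl in Ha.
    apply Rabs_lt_between in Ha.
    assert (0 < Rmin a b). { apply Rmin_glb_lt; lra. } lra.
  - apply Hf; lra.
Qed.

Lemma core (alpha L1 Lin : R) (Q Pc M : R -> R) :
  0 < alpha -> 0 < L1 -> L1 < Lin ->
  (forall z, continuous Pc z) ->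
  (forall y, L1 <= y <= Lin -> Q y <> 0 /\ Pc y * (Q y) ^ 2 = 1) ->
  (forall t, time_of alpha Lin <= t <= time_of alpha L1 -> 0 < M t) ->
  (forall t, time_of alpha Lin <= t <= time_of alpha L1 ->
        is_derive M t (- / (Q (exp (- alpha * t)) * M t) ^ 2)) ->
  forall L, L1 <= L <= Lin ->
  M (time_of alpha L) ^ 3 =
  M (time_of alpha Lin) ^ 3 - 3 / alpha * RInt (fun x => Pc x / x) L Lin.
Proof.
  intros Ha HL1 HL1in HPc HQ HM HdM L HL.
  set (f := fun x => Pc x / x).
  assert (Hf : forall z, 0 < z -> continuous f z).
  { intros z Hz. unfold f. apply (continuous_mult Pc (fun x => / x)); [apply HPc|].
    apply continuous_Rinv; lra. }
  set (phi := fun t => M t ^ 3 + 3 / alpha * RInt f (exp (- alpha * t)) Lin).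
  assert (Hmono : forall a b, 0 < a -> 0 < b -> a <= b -> time_of alpha b <= time_of alpha a).
  { intros a b Ha' Hb' Hab. unfold time_of. unfold Rdiv.
    apply Rmult_le_compat_r. left; apply Rinv_0_lt_compat; lra.
    apply Ropp_le_contravar. destruct Hab as [Hab|Hab]. left; apply ln_increasing; lra. subst; lra. }
  destruct HL as [HLa HLb]. destruct HLb as [HLb|HLb].
  2:{ subst L. rewrite RInt_point. unfold zero; simpl. ring. }
  assert (Heq : phi (time_of alpha Lin) = phi (time_of alpha L)).
  { apply eq_is_derive.
    2:{ unfold time_of, Rdiv. apply Rmult_lt_compat_r. apply Rinv_0_lt_compat; lra.
        apply Ropp_lt_contravar, ln_increasing; lra. }
    intros t Ht.
    assert (Ht' : time_of alpha Lin <= t <= time_of alpha L1).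
    { split; [lra|]. apply Rle_trans with (time_of alpha L); [lra|]. apply Hmono; lra. }
    set (e := exp (- alpha * t)).
    assert (He : L <= e <= Lin).
    { rewrite <- (time_exp alpha L), <- (time_exp alpha Lin) by lra. unfold e.
      split; apply exp_mono; nra. }
    destruct (HQ e) as [HQnz HQe]; [lra|].
    assert (HMt := HM t Ht'). assert (HdMt := HdM t Ht').
    assert (D1 := is_derive_pow M 3 t _ HdMt).
    assert (De : is_derive (fun s => exp (- alpha * s)) t (- alpha * e)).
    { unfold e. auto_derive; [exact I| ring]. }
    assert (DF := F_derive f Lin e Hf ltac:(lra) ltac:(lra)).
    assert (D2 := is_derive_comp (fun a => RInt f a Lin) (fun s => exp (- alpha * s)) t _ _ DF De).
    assert (D3 := is_derive_scal _ t (3 / alpha) _ D2).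
    assert (D4 := is_derive_plus _ _ t _ _ D1 D3).
    unfold phi. eapply is_derive_eqv. exact D4.
    unfold plus, scal, zero, mult; simpl. unfold mult; simpl. fold e. unfold f.
    simpl. field_simplify_eq; [| repeat split; lra].
    replace (3 * Q e ^ 2 * alpha * Pc e) with (3*alpha*(Pc e * Q e ^2)) by ring; rewrite HQe; ring. }
  unfold phi in Heq. rewrite !time_exp in Heq by lra.
  rewrite RInt_point in Heq. unfold zero in Heq; simpl in Heq. lra.
Qed.

Lemma cR_mult (f g : R -> R) x : continuous f x -> continuous g x -> continuous (fun y => f y * g y) x.
Proof. intros; now apply (continuous_mult f g). Qed.
Lemma cR_plus (f g : R -> R) x : continuous f x -> continuous g x -> continuous (fun y => f y + g y) x.
Proof. intros; now apply (continuous_plus f g). Qed.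
Lemma cR_minus (f g : R -> R) x : continuous f x -> continuous g x -> continuous (fun y => f y - g y) x.
Proof. intros; apply (continuous_plus f (fun y => - g y)); auto. now apply (continuous_opp g). Qed.
Lemma cR_div (f g : R -> R) x : continuous f x -> continuous g x -> g x <> 0 -> continuous (fun y => f y / g y) x.
Proof. intros; apply cR_mult; auto. now apply continuous_Rinv_comp. Qed.
Lemma cR_pow (f : R -> R) n x : continuous f x -> continuous (fun y => f y ^ n) x.
Proof. intros H; induction n; simpl. apply continuous_const. now apply cR_mult. Qed.
Lemma cR_const (k : R) x : continuous (fun _ : R => k) x.
Proof. apply continuous_const. Qed.
Lemma cR_id x : continuous (fun y : R => y) x.
Proof. apply continuous_id. Qed.

Definition cl (a b x : R) := (a + b + Rabs (x - a) - Rabs (x - b)) / 2.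

Lemma cl_in a b x : a < b -> a <= cl a b x <= b.
Proof. intros H; unfold cl; unfold Rabs; repeat destruct Rcase_abs; lra. Qed.
Lemma cl_id a b x : a <= x <= b -> cl a b x = x.
Proof. intros H; unfold cl; unfold Rabs; repeat destruct Rcase_abs; lra. Qed.
Lemma cl_cont a b x : continuous (cl a b) x.
Proof.
  unfold cl. apply cR_div; [| apply cR_const| lra].
  apply cR_minus; [apply cR_plus|]; [apply cR_const| |];
  apply continuous_Rabs_comp, cR_minus; (apply cR_id || apply cR_const).
Qed.

Lemma comp_cont (a b : R) (g : R -> R) x : a < b ->
  continuous_on (fun y => a <= y <= b) g -> continuous (fun y => g (cl a b y)) x.
Proof.
  intros Hab Hg.
  apply (filterlim_comp _ _ _ (cl a b) g _ (within (fun y => a <= y <= b) (locally (cl a b x)))).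
  - intros P HP. unfold within in HP. apply (cl_cont a b x) in HP.
    unfold filtermap in *. eapply filter_imp; [|exact HP]. simpl. intros z Hz. apply Hz, cl_in, Hab.
  - apply Hg, cl_in, Hab.
Qed.

Theorem proposition4p9
  (f0 f2 alpha L1 Lin : R) (c h : R -> R)
  (hf0 : 0 < f0) (hf2 : 0 < f2) (halpha : 0 < alpha)
  (hL1 : 0 < L1) (hL1in : L1 < Lin)
  (hc : continuous_on (fun x => L1 <= x <= Lin) c)
  (hcnz : forall x, L1 <= x <= Lin -> 192 * f2 * x ^ 2 - 2 * f0 * c x <> 0)
  (hh : continuous_on (fun x => L1 <= x <= Lin) h)
  (hhnz : forall x, L1 <= x <= Lin -> 1 - 4 * PI / 3 * Geff f0 f2 c x * h x <> 0) :
  (* (a) no gravitational memory *)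
  (forall M : R -> R,
     (forall t, time_of alpha Lin <= t <= time_of alpha L1 -> 0 < M t) ->
     (forall t, time_of alpha Lin <= t <= time_of alpha L1 ->
        is_derive M t (- / (Geff f0 f2 c (exp (- alpha * t)) * M t) ^ 2)) ->
     forall L, L1 <= L <= Lin ->
       M (time_of alpha L) =
       cbrt (M (time_of alpha Lin) ^ 3
             - 1 / (3 * alpha * PI ^ 2) *
               RInt (fun x => (192 * f2 * x ^ 2 - 2 * f0 * c x) ^ 2 / x) L Lin))
  /\
  (* (b) gravitational memory *)
  (forall M : R -> R,
     (forall t, time_of alpha Lin <= t <= time_of alpha L1 -> 0 < M t) ->
     (forall t, time_of alpha Lin <= t <= time_of alpha L1 ->
        is_derive M t (- / (GeffH f0 f2 c h (exp (- alpha * t)) * M t) ^ 2)) ->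
     forall L, L1 <= L <= Lin ->
       M (time_of alpha L) =
       cbrt (M (time_of alpha Lin) ^ 3
             - 3 / alpha *
               RInt (fun x => (1 - 4 * PI / 3 * Geff f0 f2 c x * h x) ^ 2
                              / (x * Geff f0 f2 c x ^ 2)) L Lin)).
Proof.
  assert (HPI := PI_RGT_0).
  set (D := fun y => 192 * f2 * cl L1 Lin y ^ 2 - 2 * f0 * c (cl L1 Lin y)).
  assert (HDnz : forall y, D y <> 0) by (intro y; apply hcnz, cl_in, hL1in).
  assert (HDc : forall y, continuous D y).
  { intro y. unfold D. apply cR_minus; apply cR_mult; try apply cR_const.
    apply cR_pow, cl_cont. apply (comp_cont L1 Lin c y hL1in hc). }
  assert (HDid : forall y, L1 <= y <= Lin -> D y = 192 * f2 * y ^ 2 - 2 * f0 * c y).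
  { intros y Hy. unfold D. now rewrite cl_id. }
  assert (HML : forall M L, L1 <= L <= Lin ->
     (forall t, time_of alpha Lin <= t <= time_of alpha L1 -> 0 < M t) ->
     M (time_of alpha L) = cbrt (M (time_of alpha L) ^ 3)).
  { intros M L HL HM. rewrite cbrt_cube; auto. apply HM. split.
    - unfold time_of, Rdiv. apply Rmult_le_compat_r. left; apply Rinv_0_lt_compat; lra.
      apply Ropp_le_contravar. destruct (proj2 HL) as [H|H]. left; apply ln_increasing; lra. subst; lra.
    - unfold time_of, Rdiv. apply Rmult_le_compat_r. left; apply Rinv_0_lt_compat; lra.
      apply Ropp_le_contravar. destruct (proj1 HL) as [H|H]. left; apply ln_increasing; lra. subst; lra. }
  split.
  - intros M HM HdM L HL.
    set (Pc := fun y => D y ^ 2 / (9 * PI ^ 2)).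
    assert (HPc : forall z, continuous Pc z).
    { intro z. unfold Pc. apply cR_div; [apply cR_pow, HDc| apply cR_const| ].
      apply Rgt_not_eq. nra. }
    assert (HQ : forall y, L1 <= y <= Lin -> Geff f0 f2 c y <> 0 /\ Pc y * (Geff f0 f2 c y) ^ 2 = 1).
    { intros y Hy. unfold Pc, Geff. rewrite HDid by exact Hy. assert (Hd := hcnz y Hy).
      split. unfold Rdiv. apply Rmult_integral_contrapositive; split. lra. now apply Rinv_neq_0_compat.
      field. lra. }
    rewrite (HML M L HL HM).
    rewrite (core alpha L1 Lin _ Pc M halpha hL1 hL1in HPc HQ HM HdM L HL).
    f_equal.
    rewrite (RInt_ext (fun x => (192 * f2 * x ^ 2 - 2 * f0 * c x) ^ 2 / x) (fun x => scal (9 * PI ^ 2) (Pc x / x))).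
    2:{ intros x Hx. rewrite Rmin_left, Rmax_right in Hx by lra.
        unfold scal; simpl; unfold mult; simpl. unfold Pc. rewrite HDid by lra.
        field. split; [lra|]. apply Rgt_not_eq. nra. }
    rewrite (RInt_scal (V:=R_CompleteNormedModule)).
    2:{ apply ex_RInt_continuous. intros z Hz. rewrite Rmin_left, Rmax_right in Hz by lra.
        apply cR_div; [apply HPc| apply cR_id| lra]. }
    unfold scal; simpl; unfold mult; simpl. field. lra.
  - intros M HM HdM L HL.
    set (Pc := fun y => (1 - 4 * PI / 3 * (3 * PI / D y) * h (cl L1 Lin y)) ^ 2 * (D y ^ 2 / (9 * PI ^ 2))).
    assert (HPc : forall z, continuous Pc z).
    { intro z. unfold Pc. apply cR_mult.
      - apply cR_pow. apply cR_minus; [apply cR_const|]. apply cR_mult.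
        apply cR_mult; [apply cR_const|]. apply cR_div; [apply cR_const|apply HDc|apply HDnz].
        apply (comp_cont L1 Lin h z hL1in hh).
      - apply cR_div; [apply cR_pow, HDc| apply cR_const| ]. apply Rgt_not_eq. nra. }
    assert (HPid : forall y, L1 <= y <= Lin -> Pc y =
       (1 - 4 * PI / 3 * Geff f0 f2 c y * h y) ^ 2 * ((192 * f2 * y ^ 2 - 2 * f0 * c y) ^ 2 / (9 * PI ^ 2))).
    { intros y Hy. unfold Pc, Geff. rewrite HDid, cl_id by exact Hy. reflexivity. }
    assert (HQ : forall y, L1 <= y <= Lin -> GeffH f0 f2 c h y <> 0 /\ Pc y * (GeffH f0 f2 c h y) ^ 2 = 1).
    { intros y Hy. rewrite HPid by exact Hy. unfold GeffH. assert (Hk := hhnz y Hy).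
      unfold Geff in *. assert (Hd := hcnz y Hy).
      split. unfold Rdiv. apply Rmult_integral_contrapositive; split.
      apply Rmult_integral_contrapositive; split. lra. now apply Rinv_neq_0_compat.
      now apply Rinv_neq_0_compat.
      set (Dy := 192 * f2 * y ^ 2 - 2 * f0 * c y) in *.
      assert (Hk' : Dy - 4 * PI * PI * h y <> 0).
      { intro E; apply Hk. replace (1 - 4 * PI / 3 * (3 * PI / Dy) * h y) with ((Dy - 4 * PI * PI * h y) / Dy) by (field; exact Hd).
        rewrite E. field. exact Hd. }
      field. repeat split; try lra; try exact Hk'; exact Hd. }
    rewrite (HML M L HL HM).
    rewrite (core alpha L1 Lin _ Pc M halpha hL1 hL1in HPc HQ HM HdM L HL).
    f_equal. f_equal. f_equal. apply RInt_ext.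
    intros x Hx. rewrite Rmin_left, Rmax_right in Hx by lra.
    assert (Hx' : L1 <= x <= Lin) by lra.
    rewrite HPid by exact Hx'. unfold Geff. assert (Hd := hcnz x Hx').
    set (Dx := 192 * f2 * x ^ 2 - 2 * f0 * c x) in *. change (@eq R (((1 - 4 * PI / 3 * (3 * PI / Dx) * h x) ^ 2 * (Dx ^ 2 / (9 * PI ^ 2))) / x) ((1 - 4 * PI / 3 * (3 * PI / Dx) * h x) ^ 2 / (x * (3 * PI / Dx) ^ 2))). field. repeat split; lra.
Qed.
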